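(* Let $n \ge 3$, let $x_1 < x_2 < \cdots < x_n$ and $y_1 < y_2 < \cdots < y_n$ be real numbers, and let $A = [e^{x_i y_j}]_{i,j=1,\ldots,n}$. Define $u_j := y_{j+1} - y_1$ for $j=1,\ldots,n-1$, and $s(\mathbf{x}) := x_1+\cdots+x_n$. Then $$\det(A) = e^{s(\mathbf{x}) y_1}\, u_1 u_2\cdots u_{n-1} \int_{x_{n-1}}^{x_n}\cdots\int_{x_2}^{x_3}\int_{x_1}^{x_2} \det(B)\, dt_1\, dt_2\cdots dt_{n-1},$$ where $B$ is the $(n-1)\times(n-1)$ matrix $B = [e^{t_i u_j}]_{i,j=1,\ldots,n-1}$ (depending on the integration variables $t_1,\ldots,t_{n-1}$, with $t_k$ ranging over $[x_k,x_{k+1}]$). *)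

(* Defs.v *)
From HB Require Import structures.
From mathcomp Require Import all_boot all_order all_algebra.
From mathcomp Require Import all_classical all_reals all_analysis.
Set Implicit Arguments. Unset Strict Implicit. Unset Printing Implicit Defensive.
Import Order.TTheory GRing.Theory Num.Theory.
Local Open Scope ring_scope.
Local Open Scope classical_set_scope.

(* Iterated integral with integration variables t_0, t_1, ... (0-based),
   t_k ranging over [x k, x (k+1)], t_0 innermost:
   iter_int x 0 f = f,
   iter_int x (k+1) f t = \int_{x k}^{x (k+1)} (iter_int x k f) (t[k := s]) ds.
   iter_int x m f t no longer depends on t_0, ..., t_(m-1). *)
Fixpoint iter_int (R : realType) (x : nat -> R) (k : nat)
    (f : (nat -> R) -> R) : (nat -> R) -> R :=
  match k with
  | 0 => f
  | k'.+1 => fun t =>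
      Rintegral (@lebesgue_measure R) `[x k', x k'.+1]
        (fun s => iter_int x k' f (fun i => if i == k' then s else t i))
  end.

(* Main.v *)
Require Import Defs.
From HB Require Import structures.
From mathcomp Require Import all_boot all_order all_algebra.
From mathcomp Require Import all_classical all_reals all_analysis.
From mathcomp Require Import fingroup perm.
Import Order.TTheory GRing.Theory Num.Theory.
Import numFieldNormedType.Exports.
Local Open Scope ring_scope.
Local Open Scope classical_set_scope.

Lemma der_exp {R : realType} (c s : R) :
  is_derive s 1 (fun s => expR (s * c)) (c * expR (s * c)).
Proof.
have h1 : is_derive s 1 (fun s : R => s * c) c.
  have := @is_deriveZ R R R (fun s => s) c s 1 1 (is_derive_id _ _).
  rewrite /GRing.scale /= mulr1.
  move=> h. 
  have -> : (fun s : R => s * c) = (fun s => c * s) by apply: funext => t; rewrite mulrC.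
  exact: h.
have := @is_derive1_comp R expR (fun t => t * c) s _ _ (is_derive_expR (s * c)) h1.
by rewrite mulrC.
Qed.

Lemma cont_exp {R : realType} (c : R) : continuous (expR \o ( *%R^~ c) : R -> R).
Proof.
move=> s.
apply: continuous_comp; [exact: mulrr_continuous | exact: continuous_expR].
Qed.

Lemma integrable_exp (R : realType) (a b c : R) :
  (@lebesgue_measure R).-integrable `[a, b] (EFin \o (fun s => expR (s * c))).
Proof.
apply: continuous_compact_integrable; first exact: segment_compact.
have := continuous_subspaceT (cont_exp c). exact.
Qed.

Lemma cont_cexp {R : realType} (C c : R) :
  continuous (( *%R C) \o (expR \o ( *%R^~ c)) : R -> R).
Proof.
move=> s.
apply: continuous_comp; [exact: cont_exp | exact: mulrl_continuous].
Qed.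

Lemma integrable_cexp (R : realType) (a b C c : R) :
  (@lebesgue_measure R).-integrable `[a, b] (EFin \o (fun s => C * expR (s * c))).
Proof.
apply: continuous_compact_integrable; first exact: segment_compact.
have := continuous_subspaceT (cont_cexp C c). exact.
Qed.

Lemma Rint_sum (R : realType) (I : Type) (s : seq I) (D : set R)
  (f : I -> R -> R) : measurable D ->
  (forall i, (@lebesgue_measure R).-integrable D (EFin \o f i)) ->
  Rintegral (@lebesgue_measure R) D (fun x => \sum_(i <- s) f i x)
  = \sum_(i <- s) Rintegral (@lebesgue_measure R) D (f i).
Proof.
move=> mD hf; elim: s => [|j s IH].
  under eq_Rintegral do rewrite big_nil.
  by rewrite Rintegral_cst // mul0r big_nil.
under eq_Rintegral do rewrite big_cons.
rewrite RintegralD // ?IH ?big_cons //.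
have -> : EFin \o (fun x => \sum_(i <- s) f i x) = (fun x => \sum_(i <- s) (f i x)%:E).
  by apply: funext => x /=; rewrite sumEFin.
by apply: integrable_sum => // i _; exact: hf.
Qed.

Definition J {R : realType} (x : nat -> R) (i : nat) (c : R) :=
  Rintegral (@lebesgue_measure R) `[x i, x i.+1] (fun s => expR (s * c)).

Lemma iter_prod (R : realType) (x : nat -> R) (I : finType) (c : I -> R)
  (a : I -> nat -> R) (N k : nat) : (k <= N)%N -> forall t,
  iter_int x k (fun t => \sum_(o : I) c o * \prod_(0 <= i < N) expR (t i * a o i)) t
  = \sum_(o : I) c o * (\prod_(0 <= i < k) J x i (a o i))
      * \prod_(k <= i < N) expR (t i * a o i).
Proof.
elim: k => [|k IH] kN t /=.
  by apply: eq_bigr => o _; rewrite (big_geq (leqnn 0)) mulr1.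
under eq_Rintegral do rewrite IH ?(ltnW kN) //.
have e : forall s, \sum_(o : I) c o * (\prod_(0 <= i < k) J x i (a o i)) *
      \prod_(k <= i < N) expR ((if i == k then s else t i) * a o i)
   = \sum_(o : I) (c o * (\prod_(0 <= i < k) J x i (a o i)) *
      \prod_(k.+1 <= i < N) expR (t i * a o i)) * expR (s * a o k).
  move=> s; apply: eq_bigr => o _.
  rewrite (@big_ltn _ _ _ k N _ kN) /= eqxx.
  rewrite (@eq_big_nat _ _ _ k.+1 N _ (fun i => expR (t i * a o i))); last first.
    by move=> i /andP [ki _]; rewrite (gtn_eqF ki).
  rewrite -!mulrA; congr (_ * (_ * _)); exact: mulrC.
under eq_Rintegral do rewrite e.
rewrite Rint_sum //; last by move=> o; exact: integrable_cexp.
apply: eq_bigr => o _.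
rewrite RintegralZl //; last exact: integrable_exp.
rewrite big_nat_recr //= /J.
by rewrite -!mulrA; congr (_ * (_ * _)); rewrite mulrC.
Qed.

Lemma int_exp (R : realType) (a b c : R) : a < b ->
  c * Rintegral (@lebesgue_measure R) `[a, b] (fun s => expR (s * c))
  = expR (b * c) - expR (a * c).
Proof.
move=> ab.
rewrite -RintegralZl //; last exact: integrable_exp.
rewrite /Rintegral.
rewrite (@continuous_FTC2 R (fun s => c * expR (s * c)) (fun s => expR (s * c)) a b ab) //.
- have := continuous_subspaceT (cont_cexp c c). exact.
- split.
  + by move=> s _; case: (der_exp c s).
  + exact/cvg_at_right_filter/(cont_exp c).
  + exact/cvg_at_left_filter/(cont_exp c).
- by move=> s _; rewrite derive1E; case: (der_exp c s).
Qed.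

Lemma sumM (R : comRingType) n (i : 'I_n.+1) (F : 'I_n.+1 -> R) :
  \sum_k (((i == k)%:R - ((i : nat) == k.+1)%:R) * F k)
  = F i - (if (0 < i)%N then F (inord i.-1) else 0).
Proof.
under eq_bigr do rewrite mulrBl.
rewrite sumrB; congr (_ - _).
  rewrite (bigD1 i) //= eqxx mul1r big1 ?addr0 // => k /negbTE.
  by rewrite eq_sym => ->; rewrite mul0r.
case: i => [[|i] hi] /=.
  by rewrite big1 // => k _; rewrite mul0r.
rewrite (bigD1 (inord i)) //= inordK ?eqxx ?mul1r; last by apply: ltnW.
rewrite big1 ?addr0 // => k hk.
have -> : (i.+1 == k.+1) = false.
  apply/negbTE; apply: contra hk => /eqP [ek]; apply/eqP; apply: val_inj.
  by rewrite /= inordK ?ek // ltnW.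
by rewrite mul0r.
Qed.


Theorem lemma1 (R : realType) (n : nat) (x y : nat -> R)
  (hn : (3 <= n)%N)
  (hx : forall i j : nat, (i < j < n)%N -> x i < x j)
  (hy : forall i j : nat, (i < j < n)%N -> y i < y j) :
  let A := \matrix_(i < n, j < n) expR (x i * y j) in
  let u := fun j : nat => y j.+1 - y 0%N in
  let s := \sum_(i < n) x i in
  let B := fun t : nat -> R =>
    \matrix_(i < n.-1, j < n.-1) expR (t i * u j) in
  \det A = expR (s * y 0%N) * (\prod_(j < n.-1) u j) *
           iter_int x n.-1 (fun t => \det (B t)) (fun _ => 0).
Proof.
have [m em] : exists m, n = m.+2 by exists n.-2; move: hn; case: (n) => [|[|[|k]]].
subst n => A u s B /=.
pose D := \matrix_(i < m.+1, j < m.+1) (expR (x i.+1 * u j) - expR (x i * u j)).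
have hB : (fun t => \det (B t)) = (fun t => \sum_(o : 'S_(m.+1)) (-1) ^+ o *
     \prod_(0 <= i < m.+1) expR (t i * u (o (inord i)))).
  apply: funext => t; rewrite /determinant; apply: eq_bigr => o _.
  rewrite big_mkord; congr (_ * _); apply: eq_bigr => i _.
  by rewrite mxE inord_val.
have step2 : \prod_(j < m.+1) u j *
    iter_int x m.+1 (fun t => \det (B t)) (fun _ => 0) = \det D.
  rewrite hB iter_prod // /determinant mulr_sumr; apply: eq_bigr => o _.
  rewrite (big_geq (leqnn _)) mulr1 big_mkord.
  rewrite (reindex_inj (@perm_inj _ o)) /= mulrCA -big_split /=.
  congr (_ * _); apply: eq_bigr => i _.
  rewrite mxE inord_val /J int_exp //; apply: hx.
  by rewrite ltnSn /= ltnS.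
rewrite -mulrA step2.
pose A' := \matrix_(i < m.+2, j < m.+2) expR (x i * (y j - y 0)).
have hA : A = diag_mx (\row_i expR (x i * y 0)) *m A'.
  apply/matrixP => i j; rewrite mul_diag_mx !mxE -expRD.
  by rewrite mulrBr addrC subrK.
rewrite hA det_mulmx det_diag.
have -> : \prod_(i < m.+2) (\row_(i0 < m.+2) expR (x i0 * y 0)) 0 i = expR (s * y 0).
  under eq_bigr do rewrite mxE.
  by rewrite -expR_sum /s mulr_suml.
congr (_ * _).
pose M := \matrix_(i < m.+2, k < m.+2) ((i == k)%:R - ((i : nat) == k.+1)%:R) : 'M[R]_(m.+2).
have hM : \det M = 1.
  rewrite det_trig.
    by apply: big1 => i _; rewrite mxE eqxx /= eqn_leq ltnn andbF subr0.
  apply/is_trig_mxP => i j ij; rewrite mxE.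
  have /negbTE -> : i != j by rewrite -val_eqE /= neq_ltn ij.
  have -> : ((i : nat) == j.+1) = false by apply/negbTE; rewrite neq_ltn (ltn_trans ij) ?orbT.
  by rewrite subr0.
rewrite -[\det A']mul1r -hM -det_mulmx.
have hE : forall i j, (M *m A') i j = A' i j - (if (0 < i)%N then A' (inord i.-1) j else 0).
  by move=> i j; rewrite mxE -(@sumM _ _ i (fun k => A' k j)); apply: eq_bigr => k _; rewrite mxE.
rewrite (expand_det_col _ ord0) big_ord_recl big1 ?addr0; last first.
  move=> i _; rewrite hE !mxE /= subrr !mulr0 expR0 subrr mul0r //.
rewrite hE !mxE /= subrr mulr0 expR0 subr0 mul1r /cofactor /= expr0 mul1r.
congr (\det _); apply/matrixP => i j; rewrite [LHS]mxE [LHS]mxE hE !mxE /= inordK.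
  by rewrite /bump /u /= add0n.
by rewrite add0n (leq_trans (ltn_ord i)).
Qed.
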